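(* For $\zeta\in[a,\tau)$ define $$D(\zeta)=\left[\frac{1}{\epsilon}\Lambda\left(e^{\epsilon(\omega-\tau)}-1\right)-\frac{1-\tau_2}{\epsilon-\widetilde{\epsilon}}\,\frac{1-e^{-r(\omega-\tau)}}{ra_\tau}\left(1-e^{(\widetilde{\epsilon}-\epsilon)(\tau-\zeta)}\right)\right]e^{\epsilon(\tau-\zeta)}$$ (this is $\widetilde{M_1}(\zeta)-\widetilde{M_2}(\zeta)$), and let $$\Lambda_{EP}=\frac{\epsilon(1-\tau_2)\left(1-e^{-r(\omega-\tau)}\right)\left(e^{(\widetilde{\epsilon}-\epsilon)(\tau-a)}-1\right)}{ra_\tau\left(e^{\epsilon(\omega-\tau)}-1\right)(\widetilde{\epsilon}-\epsilon)}.$$ If $\Lambda\le\Lambda_{EP}$, then there exists a critical age $\widetilde{\zeta}\in[a,\tau)$ such that $D(\zeta)<0$ for $a\le\zeta<\widetilde{\zeta}$, $D(\widetilde{\zeta})=0$, and $D(\zeta)>0$ for $\widetilde{\zeta}<\zeta<\tau$ (younger participants prefer EET to PAYGO, older ones prefer PAYGO, age $\widetilde\zeta$ is indifferent). If $\Lambda>\Lambda_{EP}$, then $D(\zeta)>0$ for all $\zeta\in[a,\tau)$ (all these participants prefer PAYGO to EET).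
   Context: Parameters: $r>0$, $\mu>r$, $\sigma>0$, real $\gamma,\xi,\alpha,\beta$; $\nu=(\mu-r)/\sigma$, $\epsilon=\gamma-r-\xi\nu\neq0$, $\widetilde{\epsilon}=\alpha-r-\beta\nu\neq\epsilon$. Ages $a<\tau<\omega$; post-retirement tax rate $\tau_2\in[0,1)$. With survival function $s(x)=e^{-A_m(x-a)-\frac{B_m}{\ln c}(c^x-c^a)}$ (Makeham constants $A_m,B_m,c$) and population growth rate $\rho$: $\Lambda=\frac{\int_a^\tau e^{-(\rho+A_m)(u-a)-\frac{B_m}{\ln c}(c^u-c^a)}du}{\int_\tau^\omega e^{-(\rho+A_m)(u-a)-\frac{B_m}{\ln c}(c^u-c^a)}du}>0$, and $a_\tau=\int_0^\infty e^{-(r+A_m)t-\frac{B_m}{\ln c}c^\tau(c^t-1)}dt\in(0,\infty)$ (annuity factor). Interpretation: $\zeta$ is a participant's age at the decision time, and the sign of $D(\zeta)$ determines whether that participant's utility gains more from the PAYGO contribution rate ($D>0$) or the EET contribution rate ($D<0$). *)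

(* Defs.v *)
From Stdlib Require Import Reals Lra.
From Coquelicot Require Import Coquelicot.
Open Scope R_scope.

Definition nu_of (r mu sigma : R) : R := (mu - r) / sigma.
Definition eps_of (r mu sigma gamma xi : R) : R := gamma - r - xi * nu_of r mu sigma.
Definition epst_of (r mu sigma alpha beta : R) : R := alpha - r - beta * nu_of r mu sigma.

Definition lam_integrand (rho Am Bm c a u : R) : R :=
  exp (- (rho + Am) * (u - a) - Bm / ln c * (Rpower c u - Rpower c a)).

Definition Lambda_of (rho Am Bm c a tau omega : R) : R :=
  RInt (lam_integrand rho Am Bm c a) a tau / RInt (lam_integrand rho Am Bm c a) tau omega.

Definition annuity_integrand (r Am Bm c tau t : R) : R :=
  exp (- (r + Am) * t - Bm / ln c * Rpower c tau * (Rpower c t - 1)).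

Definition Dfun (eps epst r tau2 Lam atau a tau omega zeta : R) : R :=
  (1 / eps * Lam * (exp (eps * (omega - tau)) - 1)
   - (1 - tau2) / (eps - epst) * ((1 - exp (- r * (omega - tau))) / (r * atau))
     * (1 - exp ((epst - eps) * (tau - zeta))))
  * exp (eps * (tau - zeta)).

Definition Lambda_EP (eps epst r tau2 atau a tau omega : R) : R :=
  eps * (1 - tau2) * (1 - exp (- r * (omega - tau))) * (exp ((epst - eps) * (tau - a)) - 1)
  / (r * atau * (exp (eps * (omega - tau)) - 1) * (epst - eps)).

(* Main.v *)
Require Import Defs.
From Stdlib Require Import Reals Lra.
From Coquelicot Require Import Coquelicot.
Open Scope R_scope.

Lemma gpos (d x : R) : d <> 0 -> 0 < x -> 0 < (exp (d*x) - 1)/d.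
Proof.
  intros hd hx. destruct (Rlt_or_le 0 d) as [h|h].
  - assert (1 < exp (d*x)). { rewrite <- exp_0. apply exp_increasing. nra. }
    apply Rdiv_lt_0_compat; lra.
  - assert (d < 0) by lra.
    assert (exp (d*x) < 1). { rewrite <- exp_0. apply exp_increasing. nra. }
    pose proof (Rinv_lt_0_compat d H). unfold Rdiv. nra.
Qed.

Lemma ginc (d s1 s2 : R) : d <> 0 -> s1 < s2 ->
  (exp (d*s1) - 1)/d < (exp (d*s2) - 1)/d.
Proof.
  intros hd h.
  assert (e : (exp (d*s2) - 1)/d - (exp (d*s1) - 1)/d
              = exp (d*s1) * ((exp (d*(s2-s1)) - 1)/d)).
  { replace (d*s2) with (d*s1 + d*(s2-s1)) by ring. rewrite exp_plus. field. auto. }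
  assert (0 < exp (d*s1) * ((exp (d*(s2-s1)) - 1)/d)).
  { apply Rmult_lt_0_compat. apply exp_pos. apply gpos; lra. }
  lra.
Qed.

Theorem theorem3p2
  (r mu sigma gamma xi alpha beta : R)
  (a tau omega tau2 : R)
  (Am Bm c rho atau : R)
  (hr : 0 < r) (hmu : r < mu) (hsigma : 0 < sigma)
  (heps : eps_of r mu sigma gamma xi <> 0)
  (hepst : epst_of r mu sigma alpha beta <> eps_of r mu sigma gamma xi)
  (hat : a < tau) (htw : tau < omega)
  (htau2 : 0 <= tau2 < 1)
  (hc : 0 < c) (hc1 : c <> 1)
  (hLam : 0 < Lambda_of rho Am Bm c a tau omega)
  (hatau_int : is_RInt_gen (annuity_integrand r Am Bm c tau)
                 (at_point 0) (Rbar_locally p_infty) atau)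
  (hatau : 0 < atau) :
  let eps := eps_of r mu sigma gamma xi in
  let epst := epst_of r mu sigma alpha beta in
  let Lam := Lambda_of rho Am Bm c a tau omega in
  let D := Dfun eps epst r tau2 Lam atau a tau omega in
  (Lam <= Lambda_EP eps epst r tau2 atau a tau omega ->
     exists zt, a <= zt < tau /\
       (forall z, a <= z < zt -> D z < 0) /\
       D zt = 0 /\
       (forall z, zt < z < tau -> 0 < D z)) /\
  (Lambda_EP eps epst r tau2 atau a tau omega < Lam ->
     forall z, a <= z < tau -> 0 < D z).
Proof.
  intros eps epst Lam D.
  assert (heps' : eps <> 0) by exact heps.
  assert (hepst' : epst <> eps) by exact hepst.
  assert (hLam' : 0 < Lam) by exact hLam.
  clearbody eps epst Lam. clear hatau_int heps hepst hLam.
  rename heps' into heps. rename hepst' into hepst. rename hLam' into hLam.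
  set (d := epst - eps).
  assert (hd : d <> 0) by (unfold d; lra).
  set (E := exp (eps * (omega - tau)) - 1).
  set (Q := 1 - exp (- r * (omega - tau))).
  set (K := (1 - tau2) * Q / (r * atau)).
  assert (hEe : 0 < E / eps).
  { unfold E. apply gpos; lra. }
  assert (hE : E <> 0).
  { intro h. rewrite h in hEe. unfold Rdiv in hEe. lra. }
  assert (hQ : 0 < Q).
  { unfold Q. assert (exp (- r * (omega - tau)) < 1).
    { rewrite <- exp_0. apply exp_increasing. nra. } lra. }
  assert (hK : 0 < K).
  { unfold K. apply Rdiv_lt_0_compat. nra. nra. }
  set (C := Lam * (E / eps)).
  assert (hC : 0 < C) by (unfold C; nra).
  set (B := fun z => C - K * ((exp (d*(tau - z)) - 1)/d)).
  assert (hDB : forall z, D z = B z * exp (eps * (tau - z))).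
  { intro z. unfold D, Dfun, B, C, K, d, E, Q. cbv beta.
    field. unfold d in hd. repeat split; try lra. }
  assert (hsign : forall z, (0 < D z <-> 0 < B z) /\ (D z < 0 <-> B z < 0)
                            /\ (D z = 0 <-> B z = 0)).
  { intro z. rewrite hDB. pose proof (exp_pos (eps * (tau - z))).
    repeat split; intro h; try nra.
    all: try (rewrite h; ring).
    all: destruct (Rtotal_order (B z) 0) as [h'|[h'|h']]; nra. }
  assert (hBinc : forall z1 z2, z1 < z2 -> B z1 < B z2).
  { intros z1 z2 h. unfold B.
    pose proof (ginc d (tau - z2) (tau - z1) hd ltac:(lra)). nra. }
  assert (hBtau : B tau = C).
  { unfold B. replace (d*(tau-tau)) with 0 by ring. rewrite exp_0.
    field; auto. }
  assert (hLEP : Lambda_EP eps epst r tau2 atau a tau omega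
                 = K * ((exp (d*(tau - a)) - 1)/d) * (eps / E)).
  { unfold Lambda_EP, K, Q, E, d. unfold E in hE. unfold d in hd.
    field. repeat split; auto; lra. }
  assert (hee : 0 < eps / E).
  { assert (eps / E = / (E / eps)) by (field; auto). rewrite H.
    apply Rinv_0_lt_compat; auto. }
  assert (hBa : B a = C - K * ((exp (d*(tau - a)) - 1)/d)) by reflexivity.
  assert (hcont : continuity B) by (unfold B; reg).
  split.
  - intro hle.
    assert (hBa0 : B a <= 0).
    { rewrite hLEP in hle. rewrite hBa. unfold C.
      assert (Lam * (E/eps) <= K * ((exp (d * (tau - a)) - 1) / d) * (eps / E) * (E/eps)).
      { apply Rmult_le_compat_r; lra. }
      replace (K * ((exp (d * (tau - a)) - 1) / d) * (eps / E) * (E/eps))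
        with (K * ((exp (d * (tau - a)) - 1) / d)) in H by (field; auto).
      lra. }
    assert (ex : exists zt, a <= zt < tau /\ B zt = 0).
    { destruct (Req_dec (B a) 0) as [h|h].
      - exists a; split; lra.
      - destruct (IVT B a tau hcont hat ltac:(lra) ltac:(lra)) as [zt [hz1 hz2]].
        exists zt. split; [|auto]. split; [lra|].
        destruct (Req_dec zt tau) as [e|e]; [subst zt; lra| lra]. }
    destruct ex as [zt [hz hB0]].
    exists zt. split; [auto|]. split; [|split].
    + intros z hz'. apply (proj1 (proj2 (hsign z))).
      pose proof (hBinc z zt ltac:(lra)). lra.
    + apply (proj2 (proj2 (hsign zt))). auto.
    + intros z hz'. apply (proj1 (hsign z)).
      pose proof (hBinc zt z ltac:(lra)). lra.
  - intros hlt z hz. apply (proj1 (hsign z)).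
    assert (hBa0 : 0 < B a).
    { rewrite hLEP in hlt. rewrite hBa. unfold C.
      assert (K * ((exp (d * (tau - a)) - 1) / d) * (eps / E) * (E/eps) < Lam * (E/eps)).
      { apply Rmult_lt_compat_r; lra. }
      replace (K * ((exp (d * (tau - a)) - 1) / d) * (eps / E) * (E/eps))
        with (K * ((exp (d * (tau - a)) - 1) / d)) in H by (field; auto).
      lra. }
    destruct (Req_dec z a) as [e|e]; [subst z; auto|].
    pose proof (hBinc a z ltac:(lra)). lra.
Qed.
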